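(* Let $C=(1,c_2,c_3,c_4,c_5,c_6)=(1,c_2,2c_2,c_4,c_2+c_4,2c_4)$ be a system with $c_4\ge 3c_2-1$ and $c_4\ne 3c_2$, and let $\ell=\lceil c_5/c_3\rceil$. Suppose $\mathrm{grd}_C(\ell c_3)=\ell c_3-c_5+1-\lfloor(\ell c_3-c_5)/c_2\rfloor(c_2-1)$ and $\mathrm{grd}_C(\ell c_3)\le\ell$. Then $C$ is canonical and the subsystem $(1,c_2,2c_2,c_4,c_2+c_4)$ is noncanonical.
   Context: A system is a tuple $C=(c_1,\dots,c_n)$ of integers with $1=c_1<c_2<\dots<c_n$; for $k\le n$, $(c_1,\dots,c_k)$ is a subsystem. For a positive integer $v$, $\mathrm{opt}_C(v)$ is the minimum of $\sum_i x_i$ over $x\in\mathbb{Z}_{\ge0}^n$ with $\sum_i c_ix_i=v$. The greedy representation of $v$ is produced by: for $i=n$ down to $1$, while $c_i\le$ remaining value, take a coin $c_i$. $\mathrm{grd}_C(v)$ is its number of coins. A positive integer $w$ is a counterexample if $\mathrm{opt}_C(w)<\mathrm{grd}_C(w)$; $C$ is canonical if it has none, noncanonical otherwise. *)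

(* Defs.v *)
From mathcomp Require Import all_boot.
Set Implicit Arguments. Unset Strict Implicit. Unset Printing Implicit Defensive.

Definition is_system (C : seq nat) : Prop :=
  0 < size C /\ nth 0 C 0 = 1 /\ sorted (fun a b => a < b) C.

Definition is_rep (C : seq nat) (v : nat) (x : seq nat) : Prop :=
  size x = size C /\ \sum_(i < size C) nth 0 C i * nth 0 x i = v.

Definition is_opt (C : seq nat) (v k : nat) : Prop :=
  (exists x, is_rep C v x /\ sumn x = k) /\
  (forall x, is_rep C v x -> k <= sumn x).

(* Greedy on coins listed in decreasing order: while c <= remaining, take c;
   i.e. take (v %/ c) coins c, leaving v %% c. *)
Fixpoint grd_desc (s : seq nat) (v : nat) : nat :=
  match s with
  | [::] => 0
  | c :: s' => v %/ c + grd_desc s' (v %% c)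
  end.

Definition grd (C : seq nat) (v : nat) : nat := grd_desc (rev C) v.

Definition counterexample (C : seq nat) (w : nat) : Prop :=
  0 < w /\ exists k, is_opt C w k /\ k < grd C w.

Definition canonical (C : seq nat) : Prop := forall w, ~ counterexample C w.
Definition noncanonical (C : seq nat) : Prop := exists w, counterexample C w.

(* Main.v *)
Require Import Defs.
From mathcomp Require Import all_boot zify.


Definition g3 a y := grd_desc [:: 2*a; a; 1] y.
Definition g5 a b y := grd_desc [:: a+b; b; 2*a; a; 1] y.

Lemma g3E a y : g3 a y = y %/ (2*a) + (y %% (2*a)) %/ a + y %% (2*a) %% a.
Proof. by rewrite /g3 /= divn1 addn0 addnA. Qed.

Lemma g5E a b y : g5 a b y = y %/ (a+b) + (y %% (a+b)) %/ b + g3 a (y %% (a+b) %% b).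
Proof. by rewrite /g5 /= addnA. Qed.

Lemma grdE a b w : grd [:: 1; a; 2*a; b; a+b; 2*b] w = w %/ (2*b) + g5 a b (w %% (2*b)).
Proof. by []. Qed.

Lemma g3_shift a k y : 0 < a -> g3 a (k * (2*a) + y) = k + g3 a y.
Proof.
move=> a0; have a2 : 0 < 2*a by lia.
by rewrite !g3E divnMDl // modnMDl !addnA.
Qed.

Lemma g3_lt2 a y : y < 2*a -> g3 a y = if y < a then y else (y - a).+1.
Proof.
move=> ya; rewrite g3E (divn_small ya) (modn_small ya) add0n.
case: ltnP => h; first by rewrite (divn_small h) (modn_small h).
have -> : y = 1 * a + (y - a) by lia.
have a0 : 0 < a by lia.
rewrite divnMDl // modnMDl divn_small ?modn_small; lia.
Qed.

Lemma g3_lt4 a t : 0 < a -> t < 4*a -> g3 a t =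
  if t < a then t else if t < 2*a then (t - a).+1
  else if t < 3*a then (t - 2*a).+1 else (t - 3*a).+2.
Proof.
move=> a0 t4; case: (ltnP t (2*a)) => h.
  rewrite g3_lt2 //; case: ltnP => //; lia.
have -> : g3 a t = 1 + g3 a (t - 2*a) by rewrite -g3_shift //; congr g3; lia.
rewrite g3_lt2; last lia.
repeat (case: ifP => ?); lia.
Qed.

Lemma g3_dec a y : 0 < a -> exists q s, y = q * (2*a) + s /\ s < 2*a /\ g3 a y = q + g3 a s.
Proof.
move=> a0; exists (y %/ (2*a)), (y %% (2*a)); rewrite -divn_eq ltn_pmod; last lia.
by split=> //; split=> //; rewrite {1}(divn_eq y (2*a)) g3_shift.
Qed.

Lemma g3_step a y c : 0 < a -> c = 1 \/ c = a \/ c = 2*a ->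
  g3 a (y + c) <= (g3 a y).+1 /\ (c = a -> g3 a y <= g3 a (y + c)) /\
  (c = 2*a -> g3 a (y + c) = (g3 a y).+1).
Proof.
move=> a0 hc; have [q [s [-> [hs ->]]]] := g3_dec a y a0.
rewrite -addnA g3_shift // (g3_lt2 _ _ hs) (g3_lt4 _ _ a0); last by move: hc; lia.
move: hc; repeat (case: ifP => ?); lia.
Qed.

Lemma g3_pair a y z : 0 < a ->
  (z = y + 1 -> g3 a z <= (g3 a y).+1) /\
  (z = y + a -> g3 a z <= (g3 a y).+1 /\ g3 a y <= g3 a z) /\
  (z = y + 2*a -> g3 a z = (g3 a y).+1).
Proof.
move=> a0; split; first by move=> ->; case: (g3_step a y _ a0 (or_introl erefl)).
split; first by move=> ->; case: (g3_step a y _ a0 (or_intror (or_introl erefl))) => ? [] H _; split=> //; exact: H.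
by move=> ->; case: (g3_step a y _ a0 (or_intror (or_intror erefl))) => _ [] _ H; exact: H.
Qed.

Definition P4 a b := forall u, u < a -> u <= g3 a (u + b - 2*a).

Lemma g3_single a b z : 0 < a -> 3*a - 1 <= b -> P4 a b ->
  (z < a -> g3 a z = z) /\ (a <= z < 2*a -> g3 a z = (z-a).+1) /\
  (b <= z + 2*a -> z + 2*a - b < a -> z + 2*a - b <= g3 a z) /\
  (b <= z + a -> z + a - b < a -> z + a - b <= g3 a z) /\
  (b <= z + 3*a -> z + 3*a - b < a -> z + 3*a - b <= (g3 a z).+1).
Proof.
move=> a0 hb p4.
have A1 : z < a -> g3 a z = z by move=> h; rewrite g3_lt2 ?h //; lia.
have A2 : a <= z < 2*a -> g3 a z = (z-a).+1.
  by move=> /andP[h1 h2]; rewrite g3_lt2 // ltnNge h1.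
have A3 : b <= z + 2*a -> z + 2*a - b < a -> z + 2*a - b <= g3 a z.
  move=> h1 h2; have := p4 _ h2; have -> : z + 2 * a - b + b - 2 * a = z by lia. done.
split=> //; split=> //; split=> //; split.
  move=> h1 h2; have := p4 _ h2.
  have -> : z + a - b + b - 2 * a = z - a by lia.
  have [_ [H _]] := g3_pair a (z - a) z a0.
  have := (H ltac:(lia)).2; lia.
move=> h1 h2; case: (leqP (3*a) b) => h3.
  have := p4 (z + 3*a - b) h2; have [_ [H _]] := g3_pair a z (z + a) a0.
  have := (H erefl).1.
  have -> : z + 3 * a - b + b - 2 * a = z + a by lia. lia.
have h4 : z < a by lia.
move: (A1 h4); lia.
Qed.

Lemma g5_lt a b s : 0 < a -> 2*a < b -> s < 2*b -> g5 a b s =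
  if s < b then g3 a s else if s < a + b then (s - b).+1 else (g3 a (s - a - b)).+1.
Proof.
move=> a0 ab sb; rewrite g5E.
case: (ltnP s (a+b)) => h1.
  rewrite (divn_small h1) (modn_small h1) add0n.
  case: ltnP => h2; first by rewrite (divn_small h2) (modn_small h2).
  have -> : s = 1 * b + (s - b) by lia.
  have b0 : 0 < b by lia.
  rewrite divnMDl // modnMDl divn_small; last lia.
  rewrite modn_small; last lia.
  rewrite g3_lt2; last lia.
  have -> : (s - b < a) = true by lia.
  lia.
have -> : s = 1 * (a + b) + (s - (a+b)) by lia.
have ab0 : 0 < a + b by lia.
rewrite divnMDl // modnMDl divn_small; last lia.
rewrite modn_small; last lia.
rewrite divn_small; last lia.
rewrite modn_small; last lia.
have -> : (1 * (a + b) + (s - (a + b)) < b) = false by lia.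
have -> : 1 * (a + b) + (s - (a + b)) - a - b = s - (a+b) by lia.
lia.
Qed.

Definition CC a b := [:: 1; a; 2*a; b; a+b; 2*b].

Lemma grd_shift a b k w : 0 < b -> grd (CC a b) (k * (2*b) + w) = k + grd (CC a b) w.
Proof.
move=> b0; rewrite /CC !grdE divnMDl ?modnMDl; lia.
Qed.

Lemma grd_lt4 a b t : 0 < a -> 2*a < b -> t < 4*b -> grd (CC a b) t =
  if t < 2*b then g5 a b t else (g5 a b (t - 2*b)).+1.
Proof.
move=> a0 ab tb; case: ltnP => h.
  by rewrite /CC grdE divn_small // modn_small.
have b0 : 0 < b by lia.
have -> : t = 1 * (2*b) + (t - 2*b) by lia.
rewrite grd_shift // /CC grdE divn_small; last lia.
rewrite modn_small; last lia.
have -> : 1 * (2 * b) + (t - 2 * b) - 2 * b = t - 2*b by lia.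
lia.
Qed.

Lemma p1 a (a0 : 0 < a) y z : z = y + 1 -> g3 a z <= (g3 a y).+1.
Proof. by case: (g3_pair a y z a0). Qed.
Lemma pa1 a (a0 : 0 < a) y z : z = y + a -> g3 a z <= (g3 a y).+1.
Proof. by case: (g3_pair a y z a0) => _ [H _] /H []. Qed.
Lemma pa2 a (a0 : 0 < a) y z : z = y + a -> g3 a y <= g3 a z.
Proof. by case: (g3_pair a y z a0) => _ [H _] /H []. Qed.
Lemma p2a a (a0 : 0 < a) y z : z = y + 2*a -> g3 a z = (g3 a y).+1.
Proof. by case: (g3_pair a y z a0) => _ [_ H] /H. Qed.
Lemma s1 a b (a0 : 0 < a) (hb : 3*a - 1 <= b) (p4 : P4 a b) z : z < a -> g3 a z = z.
Proof. by case: (g3_single a b z a0 hb p4). Qed.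
Lemma s2 a b (a0 : 0 < a) (hb : 3*a - 1 <= b) (p4 : P4 a b) z : a <= z -> z < 2*a -> g3 a z = (z-a).+1.
Proof. by case: (g3_single a b z a0 hb p4) => _ [H _] h1 h2; apply: H; rewrite h1 h2. Qed.
Lemma s3 a b (a0 : 0 < a) (hb : 3*a - 1 <= b) (p4 : P4 a b) z : b <= z + 2*a -> z + 2*a - b < a -> z + 2*a - b <= g3 a z.
Proof. by case: (g3_single a b z a0 hb p4) => _ [_ [H _]]. Qed.
Lemma s4 a b (a0 : 0 < a) (hb : 3*a - 1 <= b) (p4 : P4 a b) z : b <= z + a -> z + a - b < a -> z + a - b <= g3 a z.
Proof. by case: (g3_single a b z a0 hb p4) => _ [_ [_ [H _]]]. Qed.
Lemma s5 a b (a0 : 0 < a) (hb : 3*a - 1 <= b) (p4 : P4 a b) z : b <= z + 3*a -> z + 3*a - b < a -> z + 3*a - b <= (g3 a z).+1.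
Proof. by case: (g3_single a b z a0 hb p4) => _ [_ [_ [_ H]]]. Qed.


Lemma pe a y z : z = y -> g3 a z = g3 a y.
Proof. by move=> ->. Qed.

Ltac addf t := first [ have ? := t ltac:(lia) ltac:(lia) | have ? := t ltac:(lia) | idtac ].

Ltac prep a b s a0 ab sb :=
  rewrite grd_lt4 //; [|lia];
  rewrite (g5_lt _ _ _ a0 ab sb);
  let h := fresh "h" in
  case: ifP => h; [ rewrite (g5_lt _ _ _ a0 ab h) | rewrite (g5_lt _ _ _ a0 ab); [|lia] ];
  repeat (case: ifP => ?); try lia.

Lemma step_small a b s c : 0 < a -> 2*a < b -> 3*a - 1 <= b -> P4 a b -> s < 2*b ->
  c \in [:: 1; a; 2*a; b; a+b; 2*b] -> grd (CC a b) (s + c) <= (g5 a b s).+1.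
Proof.
move=> a0 ab hb p4 sb hc.
have {hc} : c = 1 \/ c = a \/ c = 2*a \/ c = b \/ c = a+b \/ c = 2*b.
  by move: hc; rewrite !inE => /orP[/eqP->|/orP[/eqP->|/orP[/eqP->|/orP[/eqP->|/orP[/eqP->|/eqP->]]]]]; tauto.
case=> [E|[E|[E|[E|[E|E]]]]]; rewrite {}E; prep a b s a0 ab sb.
all: try (addf (p1 a a0 s (s+1)); addf (p1 a a0 (s-a-b) (s+1-a-b));
  addf (s1 a b a0 hb p4 (s+1-2*b)); addf (s1 a b a0 hb p4 (s+1-a-b)); lia).
all: try (addf (pa1 a a0 s (s+a)); addf (s4 a b a0 hb p4 s); addf (s1 a b a0 hb p4 (s+a-a-b));
  addf (pa1 a a0 (s-a-b) (s+a-a-b)); addf (s1 a b a0 hb p4 (s+a-2*b));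
  addf (s3 a b a0 hb p4 (s-a-b)); lia).
all: try (addf (p2a a a0 s (s+2*a)); addf (s3 a b a0 hb p4 s); addf (s4 a b a0 hb p4 s);
  addf (s1 a b a0 hb p4 (s+2*a-a-b)); addf (s2 a b a0 hb p4 (s+2*a-a-b));
  addf (p2a a a0 (s-a-b) (s+2*a-a-b)); lia).
all: try (case: (ltnP (s+2*a-2*b) a) => ?;
  addf (s1 a b a0 hb p4 (s+2*a-2*b)); addf (s2 a b a0 hb p4 (s+2*a-2*b));
  addf (s5 a b a0 hb p4 (s-a-b)); addf (s3 a b a0 hb p4 (s-a-b)); lia).
all: try (addf (s1 a b a0 hb p4 s); addf (pa2 a a0 (s+b-a-b) s);
  addf (s1 a b a0 hb p4 (s+b-2*b)); addf (pa1 a a0 (s-a-b) (s+b-2*b)); lia).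
all: try (addf (pe a s (s+(a+b)-a-b)); addf (s1 a b a0 hb p4 (s+(a+b)-2*b));
  addf (s4 a b a0 hb p4 s); addf (s2 a b a0 hb p4 (s+(a+b)-2*b));
  addf (p2a a a0 (s-a-b) (s+(a+b)-2*b)); addf (s3 a b a0 hb p4 (s-a-b)); lia).
all: try (addf (pe a s (s+2*b-2*b)); addf (pe a (s-a-b) (s+2*b-2*b-a-b)); lia).
Qed.



Lemma P4_of a b : 1 < a -> 3*a - 1 <= b -> 2*a < b ->
  let l := (a + b + 2*a - 1) %/ (2*a) in
  grd (CC a b) (l * (2*a)) <= l -> P4 a b.
Proof.
move=> a1 hb ab l hl u ua.
have a0 : 0 < a by lia.
have a2 : 0 < 2*a by lia.
have hd := divn_eq (a + b + 2*a - 1) (2*a).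
have hm := ltn_pmod (a + b + 2*a - 1) a2.
rewrite -/l in hd.
set L := l * (2*a) in hl hd.
have le1 : l <= 1 -> L <= 1 * (2*a) by move=> h; rewrite leq_mul2r h orbT.
have le2 : l <= 2 -> L <= 2 * (2*a) by move=> h; rewrite leq_mul2r h orbT.
have ge3 : 3 <= l -> 3 * (2*a) <= L by move=> h; rewrite leq_mul2r h orbT.
have Lb : L < 2*b.
  case: (leqP l 2) => h; first by have := le2 h; lia.
  have := ge3 h; lia.
have l2 : 2 <= l by case: (leqP l 1) => h; [have := le1 h; lia | lia].
rewrite grd_lt4 in hl; [|lia..].
rewrite ifT in hl; [|lia..].
rewrite g5_lt in hl; [|lia..].
rewrite ifF in hl; [|lia..].
rewrite ifF in hl; [|lia..].
set r := L - a - b in hl.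
have hr : r < 2*a by rewrite /r; lia.
rewrite g3_lt2 // in hl.
case: (leqP r a) => hra.
  have E : u + b - 2*a = (l - 2) * (2*a) + (a - r + u).
    rewrite mulnBl -/L /r; lia.
  rewrite E g3_shift // g3_lt2; last lia.
  move: hl; repeat (case: ifP => ?); lia.
have l3 : 3 <= l by case: (leqP l 2) => h; [have := le2 h; rewrite /r in hra; lia | lia].
have E : u + b - 2*a = (l - 3) * (2*a) + (3*a - r + u).
  rewrite mulnBl -/L /r; lia.
rewrite E g3_shift // g3_lt4 //; last lia.
move: hl; repeat (case: ifP => ?); lia.
Qed.

Lemma grd_step a b w c : 0 < a -> 2*a < b -> 3*a - 1 <= b -> P4 a b ->
  c \in [:: 1; a; 2*a; b; a+b; 2*b] -> grd (CC a b) (w + c) <= (grd (CC a b) w).+1.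
Proof.
move=> a0 ab hb p4 hc.
have b0 : 0 < b by lia.
have b2 : 0 < 2*b by lia.
rewrite {1 2}(divn_eq w (2*b)) -addnA !grd_shift //.
have hs := ltn_pmod w b2.
rewrite (grd_lt4 a b (w %% (2*b)) a0 ab); last lia.
rewrite ifT //.
have := step_small _ _ _ _ a0 ab hb p4 hs hc; lia.
Qed.

Lemma grd_iter a b w n c : 0 < a -> 2*a < b -> 3*a - 1 <= b -> P4 a b ->
  c \in [:: 1; a; 2*a; b; a+b; 2*b] -> grd (CC a b) (w + n * c) <= grd (CC a b) w + n.
Proof.
move=> a0 ab hb p4 hc; elim: n => [|n IH]; first by rewrite mul0n addn0 addn0.
rewrite mulSnr addnA.
have := grd_step _ _ (w + n * c) _ a0 ab hb p4 hc; lia.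
Qed.

Lemma grd0 a b : grd (CC a b) 0 = 0.
Proof. by rewrite grdE div0n mod0n g5E div0n mod0n div0n mod0n g3E div0n mod0n div0n mod0n. Qed.

Lemma rep_bound a b x1 x2 x3 x4 x5 x6 : 0 < a -> 2*a < b -> 3*a - 1 <= b -> P4 a b ->
  grd (CC a b) (x1 * 1 + x2 * a + x3 * (2*a) + x4 * b + x5 * (a+b) + x6 * (2*b))
   <= x1 + x2 + x3 + x4 + x5 + x6.
Proof.
move=> a0 ab hb p4.
have H := fun w n c hc => grd_iter _ _ w n c a0 ab hb p4 hc.
have := H (x1 * 1 + x2 * a + x3 * (2*a) + x4 * b + x5 * (a+b)) x6 (2*b) ltac:(by rewrite !inE eqxx ?orbT ?orTb).
have := H (x1 * 1 + x2 * a + x3 * (2*a) + x4 * b) x5 (a+b) ltac:(by rewrite !inE eqxx ?orbT ?orTb).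
have := H (x1 * 1 + x2 * a + x3 * (2*a)) x4 b ltac:(by rewrite !inE eqxx ?orbT ?orTb).
have := H (x1 * 1 + x2 * a) x3 (2*a) ltac:(by rewrite !inE eqxx ?orbT ?orTb).
have := H (x1 * 1) x2 a ltac:(by rewrite !inE eqxx ?orbT ?orTb).
have := H 0 x1 1 ltac:(by rewrite !inE eqxx ?orbT ?orTb).
rewrite grd0 add0n; lia.
Qed.

Lemma g3_pos a t : 0 < a -> 0 < t -> 0 < g3 a t.
Proof.
move=> a0 t0; have [q [s [E [hs ->]]]] := g3_dec a t a0.
rewrite g3_lt2 //; case: (posnP q) => hq; last lia.
case: ifP => _; last lia.
move: E; rewrite hq mul0n add0n; lia.
Qed.


Lemma sum6 (C x : seq nat) : size C = 6 ->
  \sum_(i < size C) nth 0 C i * nth 0 x i =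
  nth 0 C 0 * nth 0 x 0 + nth 0 C 1 * nth 0 x 1 + nth 0 C 2 * nth 0 x 2 +
  nth 0 C 3 * nth 0 x 3 + nth 0 C 4 * nth 0 x 4 + nth 0 C 5 * nth 0 x 5.
Proof. move=> ->; rewrite !big_ord_recr big_ord0 /=; lia. Qed.

Lemma sum5 (C x : seq nat) : size C = 5 ->
  \sum_(i < size C) nth 0 C i * nth 0 x i =
  nth 0 C 0 * nth 0 x 0 + nth 0 C 1 * nth 0 x 1 + nth 0 C 2 * nth 0 x 2 +
  nth 0 C 3 * nth 0 x 3 + nth 0 C 4 * nth 0 x 4.
Proof. move=> ->; rewrite !big_ord_recr big_ord0 /=; lia. Qed.

Lemma canon a b : 1 < a -> 2*a < b -> 3*a - 1 <= b -> P4 a b -> canonical (CC a b).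
Proof.
move=> a1 ab hb p4 w [_ [k [[[x [[sx hv] hk]] _] lt]]].
have a0 : 0 < a by lia.
move: hv; rewrite sum6 // => hv.
move: sx hk; rewrite /CC /=.
case: x hv => [|x1 [|x2 [|x3 [|x4 [|x5 [|x6 [|? ?]]]]]]] //= hv _ hk.
have := rep_bound a b x1 x2 x3 x4 x5 x6 a0 ab hb p4.
have -> : x1 * 1 + x2 * a + x3 * (2 * a) + x4 * b + x5 * (a + b) + x6 * (2 * b) = w by lia.
lia.
Qed.

Lemma noncanon a b : 1 < a -> 2*a < b -> 3*a - 1 <= b -> b <> 3*a ->
  noncanonical [:: 1; a; 2*a; b; a+b].
Proof.
move=> a1 ab hb hb3; have a0 : 0 < a by lia.
exists (2*b); split; first lia.
exists 2; split; first split.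
- exists [:: 0; 0; 0; 2; 0]; split => //; split => //.
  rewrite sum5 //=; lia.
- move=> x [sx]; rewrite sum5 //.
  case: x sx => [|x1 [|x2 [|x3 [|x4 [|x5 [|? ?]]]]]] //= _ hv.
  rewrite addn0; case: (leqP 2 (x1 + (x2 + (x3 + (x4 + x5))))) => // h.
  have h1 : x1 * 1 + a * x2 + 2 * a * x3 + b * x4 + (a + b) * x5 <= (x1 + x2 + x3 + x4 + x5) * (a + b).
    rewrite !mulnDl; have := leq_mul (leqnn x2) (leq_addr b a).
    have e3 : 2 * a <= a + b by lia.
    have := leq_mul (leqnn x3) e3.
    have := leq_mul (leqnn x4) (leq_addl a b).
    have e1 : 1 <= a + b by lia.
    have := leq_mul (leqnn x1) e1.
    lia.
  have h2 : (x1 + x2 + x3 + x4 + x5) * (a + b) <= 1 * (a + b) by rewrite leq_mul2r; lia.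
  lia.
- have -> : grd [:: 1; a; 2*a; b; a+b] (2*b) = g5 a b (2*b) by [].
  rewrite g5E.
  have -> : 2 * b = 1 * (a + b) + (b - a) by lia.
  have ab0 : 0 < a + b by lia.
  rewrite divnMDl // modnMDl (divn_small (_ : b - a < a + b)); last lia.
  rewrite (modn_small (_ : b - a < a + b)); last lia.
  rewrite (divn_small (_ : b - a < b)); last lia.
  rewrite (modn_small (_ : b - a < b)); last lia.
  case: (ltnP (b - a) (2*a)) => h.
    rewrite g3_lt2 //; case: ifP => ?; lia.
  have -> : b - a = 1 * (2 * a) + (b - 3 * a) by lia.
  rewrite g3_shift //.
  have := g3_pos a (b - 3*a) a0 ltac:(lia); lia.
Qed.


Theorem lemma13 (c2 c4 : nat) :
  let C := [:: 1; c2; 2 * c2; c4; c2 + c4; 2 * c4] in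
  let c3 := 2 * c2 in
  let c5 := c2 + c4 in
  let l := (c5 + c3 - 1) %/ c3 in
  is_system C ->
  3 * c2 - 1 <= c4 ->
  c4 <> 3 * c2 ->
  grd C (l * c3) = l * c3 - c5 + 1 - ((l * c3 - c5) %/ c2) * (c2 - 1) ->
  grd C (l * c3) <= l ->
  canonical C /\ noncanonical [:: 1; c2; 2 * c2; c4; c2 + c4].
Proof.
move=> C c3 c5 l [_ [_ hs]] hb h3 _ hl.
move: hs; rewrite /C /= => /andP[a1 /andP[_ /andP[ab' _]]].
split.
  apply: canon => //.
  exact: (P4_of _ _ a1 hb ab' hl).
by apply: noncanon => //; lia.
Qed.
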